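(* For all $n>0$ and all $P\in T_{n,0,1}$, $\mathrm{word}(\phi_{n,0,1}(P))=\mathrm{flip}\circ\mathrm{rev}\circ\mathrm{sw}^-_{1,-1}(\mathrm{word}(P))$.
   Context: Words over $\{\mathrm{N},\mathrm{E}\}$ are identified with lattice paths from $(0,0)$ (N = unit north step, E = unit east step); $\mathrm{word}(P)$ is the word of a path $P$. $\mathrm{rev}(w_1\cdots w_n)=w_n\cdots w_1$, and $\mathrm{flip}$ interchanges the letters $\mathrm{N}$ and $\mathrm{E}$. The levels of a word $w=w_1\cdots w_n$ for $\mathrm{sw}^-_{1,-1}$ are $l_0=0$, $l_i=l_{i-1}+1$ if $w_i=\mathrm{N}$, $l_i=l_{i-1}-1$ if $w_i=\mathrm{E}$. $\mathrm{sw}^-_{1,-1}(w)$ is obtained by: for $k=-1,-2,\ldots$ and then $k=\ldots,2,1,0$ (all negative values in decreasing order, then all nonnegative values in decreasing order), scan $w$ from right to left and append each letter $w_i$ ($i\ge1$) with $l_i=k$. $T_{n,0,1}$ is the set of lattice paths from $(0,0)$ to $(n,n)$ with unit north and east steps that never go strictly to the right of the line $x=y$. For $P\in T_{n,0,1}$, its area vector is $g(P)=(g_0,\ldots,g_{n-1})$ where $g_i$ is the number of complete unit squares in the strip $\{x\ge0,\ i\le y\le i+1\}$ lying to the right of $P$ and to the left of the line $x=y$. For $i\ge0$ let $z^{(i)}$ be the subsequence of $g(P)$ of entries in $\{i,i-1\}$, let $M$ be the largest $i$ with $z^{(i)}$ nonempty, and let $\sigma^{(i)}$ be obtained from $z^{(i)}$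 by replacing each $i$ by $\mathrm{N}$ and each $i-1$ by $\mathrm{E}$. Then $\phi_{n,0,1}(P)$ is the path with word $\sigma^{(0)}\sigma^{(1)}\cdots\sigma^{(M)}$. *)

(* Defs.v *)
From mathcomp Require Import all_boot all_order all_algebra.
Set Implicit Arguments. Unset Strict Implicit. Unset Printing Implicit Defensive.
Import GRing.Theory Num.Theory.

Inductive letter := North | East.

Definition isN (a : letter) : bool := if a is North then true else false.
Definition isE (a : letter) : bool := if a is East then true else false.

Definition flip (a : letter) : letter := if a is North then East else North.
Definition flipw (w : seq letter) : seq letter := map flip w.

(* A path from (0,0) is identified with its word; rev is seq's rev. *)

(* T_{n,0,1}: words with n N's and n E's (path from (0,0) to (n,n)) that never
   go strictly to the right of x = y, i.e. every prefix has #E <= #N. *)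
Definition inT (n : nat) (w : seq letter) : bool :=
  [&& count isN w == n, count isE w == n &
      all (fun j => count isE (take j w) <= count isN (take j w))
          (iota 0 (size w).+1)].

Definition level (w : seq letter) (i : nat) : int :=
  ((count isN (take i w))%:Z - (count isE (take i w))%:Z)%R.

Definition level_block (w : seq letter) (k : int) : seq letter :=
  [seq nth North w i.-1 | i <- rev (iota 1 (size w)) & level w i == k].

(* sw^-_{1,-1}: negative levels -1,-2,... (decreasing), then nonnegative levels
   in decreasing order down to 0.  All levels lie in [-size w, size w]. *)
Definition sw (w : seq letter) : seq letter :=
  flatten [seq level_block w (- (k%:Z))%R | k <- iota 1 (size w)] ++
  flatten [seq level_block w (k%:Z) | k <- rev (iota 0 (size w).+1)].

(* The i-th north step (0-based) of the path goes from
   (x_i, i) to (x_i, i+1), where x_i is the number of E's before it.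
   g_i = number of unit squares [j,j+1]x[i,i+1] (j >= 0) to the right of P
   (j >= x_i) and to the left of x = y (j + 1 <= i). *)
Definition area_vector (w : seq letter) : seq nat :=
  [seq (let x := count isE (take p w) in
        let i := count isN (take p w) in
        count (fun j => (x <= j) && (j.+1 <= i)) (iota 0 (size w)))
  | p <- iota 0 (size w) & isN (nth East w p)].

Definition sigma (g : seq nat) (i : nat) : seq letter :=
  [seq (if a == i then North else East) | a <- g & (a == i) || (a.+1 == i)].

(* M = largest i with z^{(i)} nonempty *)
Definition Mmax (g : seq nat) : nat :=
  \max_(i < (\max_(a <- g) a).+2 | has (fun a : nat => (a == val i) || (a.+1 == val i)) g) val i.

Definition phi (w : seq letter) : seq letter :=
  let g := area_vector w in flatten [seq sigma g i | i <- iota 0 (Mmax g).+1].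

(* Main.v *)
Require Import Defs.
From mathcomp Require Import all_boot all_order all_algebra.
From mathcomp Require Import zify.
Import GRing.Theory Num.Theory.

Definition Lk (k : int) (w : seq letter) : seq letter :=
  map (fun p => if level w p == k then North else East)
    (filter (fun p => isN (nth East w p) && ((level w p == k) || (level w p + 1 == k)%R))
       (iota 0 (size w))).

Definition Rk (k : int) (w : seq letter) : seq letter :=
  map (fun p => flip (nth North w p)) (filter (fun p => level w p.+1 == k) (iota 0 (size w))).

Lemma level_rcons_le v a p : p <= size v -> level (rcons v a) p = level v p.
Proof. by move=> h; rewrite /level -cats1 takel_cat. Qed.

Lemma level_rcons_last v a : level (rcons v a) (size v).+1 =
  (level v (size v) + (if a is North then 1 else -1))%R.
Proof.
rewrite /level -cats1 take_oversize ?size_cat ?addn1 // take_size !count_cat.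
case: a => /=; lia.
Qed.

Lemma iotaS0 n : iota 0 n.+1 = rcons (iota 0 n) n.
Proof. by rewrite -addn1 iotaD cats1. Qed.

Lemma Lk_rcons k v a : Lk k (rcons v a) = Lk k v ++
  (if a is North then (if level v (size v) == k then [:: North]
      else if (level v (size v) + 1 == k)%R then [:: East] else [::]) else [::]).
Proof.
rewrite /Lk size_rcons iotaS0 filter_rcons nth_rcons ltnn eqxx level_rcons_le //.
have -> : [seq p <- iota 0 (size v) | isN (nth East (rcons v a) p) &&
     ((level (rcons v a) p == k) || (level (rcons v a) p + 1 == k)%R)] =
   [seq p <- iota 0 (size v) | isN (nth East v p) &&
     ((level v p == k) || (level v p + 1 == k)%R)].
  apply: eq_in_filter => p; rewrite mem_iota => /andP[_ hp].
  by rewrite nth_rcons hp level_rcons_le // ltnW.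
set F := filter _ _.
have HM : [seq (if level (rcons v a) p == k then North else East) | p <- F] =
          [seq (if level v p == k then North else East) | p <- F].
  apply/eq_in_map => p; rewrite /F mem_filter mem_iota => /andP[_ /andP[_ hp]].
  by rewrite level_rcons_le // ltnW.
case: a HM => /= HM; last by rewrite HM cats0.
case: ifP => h1; rewrite ?map_rcons HM.
  rewrite level_rcons_le // -cats1; congr (_ ++ _).
  by case: ifP => // h2; move: h1; rewrite h2 /= => ->.
by move/norP: h1 => [/negbTE -> /negbTE ->]; rewrite cats0.
Qed.

Lemma Rk_rcons k v a : Rk k (rcons v a) = Rk k v ++
  (if (level v (size v) + (if a is North then 1 else -1) == k)%R then [:: flip a] else [::]).
Proof.
rewrite /Rk size_rcons iotaS0 filter_rcons level_rcons_last.
have HF : [seq p <- iota 0 (size v) | level (rcons v a) p.+1 == k] =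
          [seq p <- iota 0 (size v) | level v p.+1 == k].
  by apply: eq_in_filter => p; rewrite mem_iota => /andP[_ hp]; rewrite level_rcons_le.
rewrite HF; set F := filter _ _.
have HM : [seq flip (nth North (rcons v a) p) | p <- F] = [seq flip (nth North v p) | p <- F].
  apply/eq_in_map => p; rewrite /F mem_filter mem_iota => /andP[_ /andP[_ hp]].
  by rewrite nth_rcons hp.
case: ifP => _; rewrite ?map_rcons HM ?cats0 // -cats1 nth_rcons ltnn eqxx //.
Qed.

Lemma key (k : int) w : (0 <= k)%R ->
  Lk k w = if (k < level w (size w))%R then rcons (Rk k w) North else Rk k w.
Proof.
move=> k0; elim/last_ind: w => [|v a IH].
  by rewrite /Lk /Rk /= /level /=; case: ifP => //; lia.
rewrite Lk_rcons Rk_rcons size_rcons level_rcons_last IH.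
set e := level v (size v).
case: a => /=; case: (boolP (k < e)%R) => hke;
  repeat (case: ifPn => ?); rewrite ?cats0 -?cats1 -?catA //; lia.
Qed.

Lemma lbB k w : flipw (rev (level_block w k)) = Rk k w.
Proof.
rewrite /level_block /flipw /Rk filter_rev !map_rev revK.
rewrite (iotaDl 1 0) filter_map -!map_comp.
by [].
Qed.

Lemma count_window x i m : x <= i -> i <= m ->
  count (fun j => (x <= j) && (j.+1 <= i)) (iota 0 m) = i - x.
Proof.
move=> hxi him.
have -> : m = x + ((i - x) + (m - i)) by lia.
rewrite !iotaD !count_cat add0n.
have -> : count (fun j => x <= j < i) (iota 0 x) = 0.
  apply/eqP; rewrite -leqn0 leqNgt -has_count; apply/hasPn => j.
  by rewrite mem_iota => /andP[_ hj] /=; lia.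
have -> : count (fun j => x <= j < i) (iota (x + (i - x)) (m - i)) = 0.
  apply/eqP; rewrite -leqn0 leqNgt -has_count; apply/hasPn => j.
  by rewrite mem_iota => /andP[hj _] /=; lia.
have -> : count (fun j => x <= j < i) (iota x (i - x)) = i - x.
  rewrite -[RHS](size_iota x); apply/eqP; rewrite -all_count; apply/allP => j.
  by rewrite mem_iota => /andP[hj1 hj2] /=; lia.
by rewrite add0n addn0.
Qed.

Definition dyck (w : seq letter) := forall p, count isE (take p w) <= count isN (take p w).

Lemma cnt_take_le (a : pred letter) p w : count a (take p w) <= size w.
Proof. apply: leq_trans (count_size _ _) _; rewrite size_take; case: ifP => //; lia. Qed.

Lemma lemA (k : nat) w : dyck w -> sigma (area_vector w) k = Lk (Posz k) w.
Proof.
move=> dw.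
rewrite /sigma /area_vector /Lk filter_map -map_comp -filter_predI.
set F := (fun p : nat => count _ (iota 0 (size w))).
have HF : forall p, Posz (F p) = level w p.
  move=> p; rewrite /F count_window ?dw ?cnt_take_le // /level.
  have := dw p; lia.
have E1 : forall p, (F p == k) = (level w p == Posz k).
  by move=> p; rewrite -HF.
have E2 : forall p, ((F p).+1 == k) = (level w p + 1 == Posz k)%R.
  by move=> p; rewrite -HF; apply/eqP/eqP; lia.
under eq_filter => p do rewrite /= E1 E2 andbC.
by apply: eq_map => p /=; rewrite E1.
Qed.

Lemma inT_dyck n w : inT n w -> dyck w.
Proof.
case/and3P => _ _ /allP H p.
case: (leqP p (size w)) => hp.
  by apply: H; rewrite mem_iota /=; lia.
rewrite take_oversize; last by lia.
by have := H (size w); rewrite take_size; apply; rewrite mem_iota /=; lia.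
Qed.

Lemma inT_end n w : inT n w -> level w (size w) = 0%R.
Proof. by case/and3P => /eqP h1 /eqP h2 _; rewrite /level take_size h1 h2; lia. Qed.

Lemma sigma_big g i : (Mmax g < i)%N -> sigma g i = [::].
Proof.
move=> hi; rewrite /sigma.
case: (boolP (has (fun a : nat => (a == i) || (a.+1 == i)) g)) => hh; last first.
  by rewrite has_filter negbK in hh; move/eqP: hh => ->.
exfalso; case/hasP: hh => a ain ha.
have ha2 : a <= \max_(a <- g) a by apply: (leq_bigmax_seq (P := predT)).
have hi2 : i < (\max_(a <- g) a).+2 by case/orP: ha => /eqP <-; lia.
have := leq_bigmax_cond (F := fun j : 'I_(\max_(a <- g) a).+2 => val j)
   (P := fun j : 'I_(\max_(a <- g) a).+2 => has (fun a : nat => (a == val j) || (a.+1 == val j)) g)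
   (Ordinal hi2).
rewrite /= => /(_ (introT hasP (ex_intro2 _ _ a ain ha))).
rewrite /Mmax in hi.
by move=> h; have := leq_ltn_trans h hi; rewrite ltnn.
Qed.

Lemma lb_big w (i : nat) : size w < i -> level_block w (Posz i) = [::].
Proof.
move=> hi; rewrite /level_block; apply: size0nil; apply/eqP; rewrite size_map size_filter.
rewrite -leqn0 leqNgt -has_count; apply/hasPn => j _.
have := cnt_take_le isN j w; rewrite /level; lia.
Qed.

Lemma lb_neg w (k : nat) : dyck w -> 0 < k -> level_block w (- Posz k)%R = [::].
Proof.
move=> dw hk; rewrite /level_block; apply: size0nil; apply/eqP; rewrite size_map size_filter.
rewrite -leqn0 leqNgt -has_count; apply/hasPn => j _.
have := dw j; rewrite /level; lia.
Qed.

Lemma flatten_range T (f : nat -> seq T) m1 m2 :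
  (forall i, m1 <= i -> f i = [::]) -> (forall i, m2 <= i -> f i = [::]) ->
  flatten (map f (iota 0 m1)) = flatten (map f (iota 0 m2)).
Proof.
have H : forall a b, a <= b -> (forall i, a <= i -> f i = [::]) ->
    flatten (map f (iota 0 b)) = flatten (map f (iota 0 a)).
  move=> a b hab hf; rewrite (_ : b = a + (b - a)); last by lia.
  rewrite iotaD map_cat flatten_cat.
  have -> : flatten (map f (iota (0 + a) (b - a))) = [::].
    rewrite add0n; move: (leqnn a); move: {2 3}a => s.
    elim: (b - a) s => //= m IH s hs.
    by rewrite hf // IH //; lia.
  by rewrite cats0.
move=> h1 h2; case: (leqP m1 m2) => hm.
  by rewrite (H m1 m2).
by rewrite (H m2 m1) //; lia.
Qed.

Lemma flatten_nils T (s : seq nat) : flatten (map (fun _ => [::] : seq T) s) = [::].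
Proof. by elim: s. Qed.

Lemma sigma_lb n w (k : nat) : inT n w -> sigma (area_vector w) k = flipw (rev (level_block w (Posz k))).
Proof.
move=> hw; rewrite lbB lemA; last exact: inT_dyck _ _ hw.
by rewrite key // (inT_end _ _ hw).
Qed.

Theorem mainTheorem3 (n : nat) (w : seq letter) :
  0 < n -> inT n w -> phi w = flipw (rev (sw w)).
Proof.
move=> _ hw.
have dw := inT_dyck _ _ hw.
rewrite /sw rev_cat.
have -> : flatten [seq level_block w (- Posz k)%R | k <- iota 1 (size w)] = [::].
  rewrite (_ : [seq level_block w (- Posz k)%R | k <- iota 1 (size w)] =
               [seq [::] | k <- iota 1 (size w)]); first exact: flatten_nils.
  by apply/eq_in_map => k; rewrite mem_iota => /andP[hk _]; rewrite lb_neg.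
rewrite cats0 rev_flatten -map_comp map_rev revK /flipw map_flatten.
rewrite /phi.
set g := area_vector w.
rewrite (@flatten_range _ (sigma g) _ (size w).+1).
- rewrite /flatten; congr foldr.
  rewrite -map_comp; apply/eq_map => k /=.
  by rewrite (sigma_lb _ _ _ hw).
- by move=> i hi; rewrite sigma_big.
- by move=> i hi; rewrite (sigma_lb _ _ _ hw) lb_big.
Qed.
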